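(* Let $p\ge 5$ be a prime and $k$ an integer with $1\le k\le \frac{p-3}{2}$, and put $t=p-1-2k$. Then, modulo $p$, \[ (-1)^k 4^{2k-1} E_t \equiv 16^t S_t(0, \tfrac{1}{64}) + 2^t S_t(\tfrac{3}{8}, \tfrac{7}{16}) + (2^t + 4^t) S_t(\tfrac{7}{16}, \tfrac{15}{32}) + (2^t + 4^t + 8^t) S_t(\tfrac{15}{32}, \tfrac{31}{64}) + (2^t + 4^t + 8^t + 16^t) S_t(\tfrac{31}{64}, \tfrac{1}{2}). \]
   Context: $E_n$ denotes the $n$th Euler number, defined by $\sec z=\sum_{n\ge0}E_n\frac{z^n}{n!}$ (so $E_2=1$, $E_4=5$). For a prime $p$, an integer $\ell$ and real numbers $0\le x<y\le 1$, $S_\ell(x,y)=\sum_{xp<s<yp} s^\ell$, the sum over integers $s$ strictly between $xp$ and $yp$. Congruences between rational numbers modulo $p$ mean that the difference has $p$-adic valuation at least $1$. *)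

(* Defs.v *)
From mathcomp Require Import all_boot all_order all_algebra.
Set Implicit Arguments. Unset Strict Implicit. Unset Printing Implicit Defensive.
Import Order.TTheory GRing.Theory Num.Theory.
Local Open Scope ring_scope.

(* Euler numbers (sec convention): sec z = sum_n E_n z^n / n!.
   Coefficient comparison in cos z * sec z = 1 gives E_0 = 1, E_odd = 0 and
   E_{2m} = sum_{j=1}^{m} (-1)^(j+1) C(2m,2j) E_{2m-2j}  (m >= 1). *)
Definition euler_next (m : nat) (s : seq int) : int :=
  if odd m then 0
  else \sum_(1 <= j < (m./2).+1)
         (-1) ^+ j.+1 * ('C(m, 2 * j))%:Z * nth 0 s (m - 2 * j)%N.

Fixpoint euler_seq (n : nat) : seq int :=
  match n with
  | 0 => [:: 1]
  | n'.+1 => let s := euler_seq n' in rcons s (euler_next n'.+1 s)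
  end.

Definition euler (n : nat) : int := nth 0 (euler_seq n) n.

(* S_l(x,y) = sum of s^l over integers s with x p < s < y p, for 0 <= x < y <= 1
   (such s lie in [0, p]). *)
Definition S (p l : nat) (x y : rat) : int :=
  \sum_(0 <= s < p.+1 | (x * p%:R < s%:R) && (s%:R < y * p%:R)) (s%:Z) ^+ l.

(* Main.v *)
Require Import Defs.
From mathcomp Require Import all_boot all_order all_algebra all_field.
From mathcomp Require Import zify ring.
Set Implicit Arguments. Unset Strict Implicit. Unset Printing Implicit Defensive.
Import Order.TTheory GRing.Theory Num.Theory.
Local Open Scope ring_scope.

Lemma even_odd_split (R : nmodType) (h : nat -> R) n :
  \sum_(r < (2 * n)%N) h r = \sum_(s < n) h (2 * s)%N + \sum_(s < n) h (2 * s).+1.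
Proof.
elim: n => [|n IH]; first by rewrite !big_ord0 addr0.
have -> : (2 * n.+1 = (2 * n).+1.+1)%N by lia.
rewrite !big_ord_recr /= IH.
rewrite -!addrA; congr (_ + _); rewrite [RHS]addrC -!addrA; congr (_ + _).
by rewrite addrC.
Qed.

Lemma bin_swap t i j : (i <= t)%N -> (j <= t)%N -> ('C(t, j) * 'C(t - j, i) = 'C(t, i) * 'C(t - i, j))%N.
Proof.
move=> hi hj; case: (leqP (i + j) t) => H.
  have Hf : (0 < i`! * j`! * (t - i - j)`!)%N by rewrite !muln_gt0 !fact_gt0.
  apply/eqP; rewrite -(eqn_pmul2r Hf); apply/eqP.
  have e1 : ('C(t, j) * (j`! * (t - j)`!))%N = t`! by apply: bin_fact; lia.
  have e2 : ('C(t - j, i) * (i`! * (t - j - i)`!))%N = (t - j)`! by apply: bin_fact; lia.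
  have e3 : ('C(t, i) * (i`! * (t - i)`!))%N = t`! by apply: bin_fact; lia.
  have e4 : ('C(t - i, j) * (j`! * (t - i - j)`!))%N = (t - i)`! by apply: bin_fact; lia.
  have -> : (t - i - j = t - j - i)%N by lia.
  transitivity ('C(t, j) * ('C(t - j, i) * (i`! * (t - j - i)`!)) * j`!)%N; first ring.
  rewrite e2.
  transitivity ('C(t, j) * (j`! * (t - j)`!))%N; first ring.
  rewrite e1 -e3.
  have -> : (t - j - i = t - i - j)%N by lia.
  rewrite -e4; ring.
have h1 : 'C(t - j, i) = 0%N by apply: bin_small; lia.
have h2 : 'C(t - i, j) = 0%N by apply: bin_small; lia.
by rewrite h1 h2 !muln0.
Qed.

Lemma ext_sum (R : nmodType) n m (F : nat -> R) : (n <= m)%N ->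
  (forall i, (n <= i < m)%N -> F i = 0) ->
  \sum_(0 <= i < n) F i = \sum_(0 <= i < m) F i.
Proof.
move=> Hnm H0; rewrite [RHS](@big_cat_nat _ _ _ n) //= [X in _ = _ + X]big1_seq ?addr0 //.
by move=> i; rewrite mem_index_iota => /H0.
Qed.

Lemma conv (R : comPzRingType) (h : nat -> R) t z w :
 \sum_(0 <= j < t.+1) 'C(t,j)%:R * h j * (z + w)^+(t - j) =
 \sum_(0 <= i < t.+1) 'C(t,i)%:R * z^+i *
     (\sum_(0 <= j < (t - i).+1) 'C(t-i,j)%:R * h j * w^+(t - i - j)).
Proof.
transitivity (\sum_(0 <= j < t.+1) \sum_(0 <= i < t.+1)
   ('C(t,j) * 'C(t - j, i))%:R * h j * w ^+ (t - j - i) * z ^+ i).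
  rewrite !big_nat; apply: eq_bigr => j /andP [_ Hj].
  rewrite addrC exprDn -(big_mkord xpredT (fun i => w ^+ (t - j - i) * z ^+ i *+ 'C(t - j, i))).
  rewrite (@ext_sum _ (t - j).+1 t.+1); last 2 first.
  - lia.
  - by move=> i Hi; rewrite bin_small ?mulr0n //; lia.
  rewrite mulr_sumr big_nat [RHS]big_nat; apply: eq_bigr => i _.
  rewrite natrM -mulr_natr; ring.
rewrite exchange_big_nat /= !big_nat; apply: eq_bigr => i /andP [_ Hi].
rewrite (@ext_sum _ (t - i).+1 t.+1); last 2 first.
- lia.
- by move=> j Hj; rewrite bin_small ?mul0r ?mulr0 //; lia.
rewrite mulr_sumr !big_nat; apply: eq_bigr => j /andP [_ Hj].
rewrite bin_swap; try lia.
rewrite natrM (subnAC t j i); ring.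
Qed.

Lemma euler_seq_size n : size (euler_seq n) = n.+1.
Proof. by elim: n => [|n IH] //=; rewrite size_rcons IH. Qed.

Lemma euler_nth n j : (j <= n)%N -> nth 0 (euler_seq n) j = euler j.
Proof.
move=> H; rewrite /euler; elim: n H => [|n IH]; first by rewrite leqn0 => /eqP ->.
rewrite leq_eqVlt => /orP [/eqP -> // | H].
by rewrite /= nth_rcons euler_seq_size H IH.
Qed.

Lemma eulerS m : euler m.+1 = euler_next m.+1 (euler_seq m).
Proof. by rewrite /euler /= nth_rcons euler_seq_size ltnn eqxx. Qed.

Lemma euler_odd m : odd m -> euler m = 0.
Proof. by case: m => // m Hm; rewrite eulerS /euler_next Hm. Qed.

Lemma euler0 : euler 0 = 1. Proof. by []. Qed.

Lemma euler_even M : (0 < M)%N -> euler (2 * M) =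
  \sum_(1 <= j < M.+1) (-1) ^+ j.+1 * ('C(2 * M, 2 * j))%:Z * euler (2 * M - 2 * j).
Proof.
case: M => // M _.
have -> : (2 * M.+1 = (2 * M).+1.+1)%N by lia.
rewrite eulerS /euler_next.
have -> : odd (2 * M).+2 = false by rewrite !oddS oddM.
have -> : (((2 * M).+2)./2 = M.+1)%N by rewrite mul2n -!doubleS doubleK.
rewrite !big_nat; apply: eq_bigr => j /andP [H1 H2].
by rewrite euler_nth //; lia.
Qed.

Definition std (R : pzRingType) (j : nat) : R :=
  if odd j then 0 else (-1) ^+ (j./2) * (euler j)%:~R.

Lemma std_rec (R : comPzRingType) m :
  \sum_(0 <= j < m.+1) 'C(m,j)%:R * std R j * (1 ^+ (m - j) + (-1) ^+ (m - j))
  = if m == 0%N then 2 else 0.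
Proof.
case: m => [|m]; first by rewrite big_nat1 /std /= !expr0 mul1r mulr1 bin0 mul1r; case: R. 
rewrite /=.
case Hm: (odd m.+1).
  rewrite big_nat big1 // => j /andP [_ Hj].
  rewrite /std; case Hoj: (odd j); first by rewrite mulr0 mul0r.
  have Ho : odd (m.+1 - j) by rewrite oddB ?Hm ?Hoj //; lia.
  by rewrite -(signr_odd _ (m.+1 - j)) Ho expr1n expr1 addrN mulr0.
have HM : m.+1 = (2 * (m.+1)./2)%N.
  by rewrite -{1}(odd_double_half m.+1) Hm add0n mul2n.
move: HM; set M := (m.+1)./2 => HM.
have M0 : (0 < M)%N by lia.
rewrite HM.
pose G j : R := if odd j then 0 else 'C(2 * M, j)%:R * ((-1) ^+ (j./2) * (euler j)%:~R) * 2.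
transitivity (\sum_(0 <= j < (2 * M).+1) G j).
  rewrite !big_nat; apply: eq_bigr => j /andP [_ Hj].
  rewrite /G /std; case Hoj: (odd j); first by rewrite mulr0 mul0r.
  have Ho : odd (2 * M - j) = false by rewrite oddB ?oddM ?Hoj //; lia.
  by rewrite -(signr_odd _ (2 * M - j)) Ho expr1n expr0.
rewrite [RHS](_ : 0 = 0 + 0) ?addr0 //.
have -> : (\sum_(0 <= j < (2 * M).+1) G j) = \sum_(j < 2 * M.+1) G j.
  have -> : (2 * M.+1 = (2 * M).+1.+1)%N by lia.
  rewrite big_mkord [RHS]big_ord_recr /= {3}/G /= oddM /= addr0.
  by apply: eq_bigr.
rewrite even_odd_split [X in _ + X]big1 ?addr0; last first.
  by move=> l _; rewrite /G oddS oddM.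
rewrite -(big_mkord xpredT (fun l => G (2 * l)%N)).
have -> : \sum_(0 <= l < M.+1) G (2 * l)%N =
          \sum_(0 <= l < M.+1) 'C(2 * M, 2 * l)%:R * ((-1) ^+ l * (euler (2 * l))%:~R) * 2.
  rewrite !big_nat; apply: eq_bigr => l _; rewrite /G oddM /=.
  have -> : ((2 * l)./2 = l)%N by rewrite mul2n doubleK.
  by [].
rewrite big_nat_rev /= big_ltn //.
rewrite (_ : (0 + M.+1 - 1 = M)%N); last lia.
rewrite euler_even // rmorph_sum /= !mulr_sumr mulr_suml -big_split /=.
rewrite big_nat big1 // => l /andP [H1 H2].
have -> : (0 + M.+1 - l.+1 = M - l)%N by lia.
have -> : (2 * (M - l) = 2 * M - 2 * l)%N by lia.
rewrite bin_sub; last lia.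
rewrite !rmorphM /= !rmorphXn /=.
have sg : (-1) ^+ M = (-1) ^+ (M - l) * (-1) ^+ l :> R by rewrite -exprD subnK //; lia.
have bb : (-1) ^+ l * (-1) ^+ l = 1 :> R by rewrite -exprMn mulrNN mulr1 expr1n.
rewrite sg exprS binn.
change (((-1 : int))%:~R : R) with (-1 : R).
change (('C(2 * M, 2 * l)%:Z)%:~R : R) with ('C(2 * M, 2 * l)%:R : R).
set a := (-1) ^+ (M - l) : R; set b := (-1) ^+ l : R.
set c := 'C(2 * M, 2 * l)%:R : R; set e := (euler (2 * M - 2 * l))%:~R : R.
transitivity (a * c * e * 2 * (1 - b * b)); first ring.
by rewrite bb subrr mulr0.
Qed.

Definition Geu (R : comPzRingType) t (z : R) :=
  \sum_(0 <= j < t.+1) 'C(t,j)%:R * std R j * z ^+ (t - j).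

Lemma Gshift (R : comPzRingType) t (z : R) :
  Geu t (z + 1) + Geu t (z - 1) = 2 * z ^+ t.
Proof.
rewrite /Geu !conv -big_split /=.
rewrite big_nat_recr //= big_nat big1 ?add0r; last first.
  move=> i /andP [_ Hi].
  rewrite -mulrDr -big_split /=.
  rewrite (eq_bigr (fun j => 'C(t - i, j)%:R * std R j * (1 ^+ (t - i - j) + (-1) ^+ (t - i - j)))).
    rewrite std_rec; have -> : (t - i == 0)%N = false by apply/negbTE; lia.
    by rewrite mulr0.
  by move=> j _; rewrite mulrDr.
rewrite -mulrDr -big_split /=.
rewrite (eq_bigr (fun j => 'C(t - t, j)%:R * std R j * (1 ^+ (t - t - j) + (-1) ^+ (t - t - j)))).
  by rewrite std_rec subnn eqxx binn mul1r mulrC.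
by move=> j _; rewrite mulrDr.
Qed.

Lemma Geven (R : comPzRingType) t (z : R) : ~~ odd t -> Geu t (- z) = Geu t z.
Proof.
move=> Ht; rewrite /Geu !big_nat; apply: eq_bigr => j /andP [_ Hj].
rewrite /std; case Hoj: (odd j); first by rewrite !mulr0 !mul0r.
rewrite (exprNn z) -(signr_odd _ (t - j)) oddB; last lia.
by rewrite Hoj (negbTE Ht) expr0 mul1r.
Qed.

Lemma G0 (R : comPzRingType) t : Geu t (0 : R) = std R t.
Proof.
rewrite /Geu big_nat_recr //= big_nat big1 ?add0r; last first.
  move=> j /andP [_ Hj]; rewrite expr0n.
  have -> : (t - j == 0)%N = false by apply/negbTE; lia.
  by rewrite mulr0.
by rewrite subnn expr0 mulr1 binn mul1r.
Qed.

Lemma tele (R : comPzRingType) t n : (0 < t)%N ->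
  \sum_(0 <= s < n.+1) (-1) ^+ s * (2 * ((2 * s)%:R : R) ^+ t) =
  (-1) ^+ n * Geu t ((2 * n).+1%:R : R) - Geu t (1 : R).
Proof.
move=> Ht; elim: n => [|n IH].
  by rewrite big_nat1 mul1r expr0n eqn0Ngt Ht /= mulr0 mul1r subrr.
rewrite big_nat_recr //= IH.
have e : ((2 * n.+1)%:R : R) = ((2 * n).+1)%:R + 1.
  by rewrite natr1; congr (_%:R); lia.
have e2 : ((2 * n.+1).+1%:R : R) = ((2 * n).+1)%:R + 1 + 1 by rewrite -e natr1.
have := Gshift t (((2 * n).+1)%:R + 1 : R); rewrite addrK => H.
rewrite e e2 -H.
rewrite exprS; ring.
Qed.

Section Fp.
Variables (p N t : nat).
Hypotheses (pr : prime p) (pN : p = (2 * N).+1) (tev : ~~ odd t) (t0 : (0 < t)%N)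
  (tp : (t < p.-1)%N).
Local Notation F := 'F_p.

Definition f (s : nat) : F := (s%:R) ^+ t.

Lemma natF0 n : (n%:R : F) = 0 -> (p %| n)%N.
Proof. by move=> /(congr1 (@nat_of_ord _)); rewrite val_Fp_nat // => /eqP. Qed.

Lemma two_neq0 : (2 : F) != 0.
Proof.
apply/eqP => /natF0 H; have := dvdn_leq (isT : (0 < 2)%N) H; lia.
Qed.

Lemma fp0 : f p = 0.
Proof. by rewrite /f pchar_Fp_0 // expr0n eqn0Ngt t0. Qed.

Lemma f_refl s : (s <= p)%N -> f (p - s) = f s.
Proof.
move=> H; rewrite /f natrB // pchar_Fp_0 // sub0r exprNn -signr_odd.
by rewrite (negbTE tev) expr0 mul1r.
Qed.

Lemma f_double s : f (2 * s) = 2 ^+ t * f s.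
Proof. by rewrite /f natrM exprMn. Qed.

Lemma exists_gen : exists g : F, (g != 0) && (g ^+ t != 1).
Proof.
case: (boolP [exists g : F, (g != 0) && (g ^+ t != 1)]) => [/existsP // | /existsPn H].
exfalso.
pose rs := enum (predC1 (0 : F)).
have Hr : all (root ('X^t - 1%:P)) rs.
  apply/allP => x; rewrite mem_enum /= => Hx.
  have := H x; rewrite negb_and negbK => /orP [H0 | /negPn/eqP Hxt].
    by rewrite inE H0 in Hx.
  by rewrite rootE !hornerE Hxt subrr.
have Hu : uniq rs by rewrite enum_uniq.
have Hnz : ('X^t - 1%:P : {poly F}) != 0.
  by rewrite -size_poly_eq0 size_XnsubC.
have := max_poly_roots Hnz Hr Hu.
rewrite size_XnsubC // -cardE cardC1.
rewrite card_Fp //; lia.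
Qed.

Lemma psumF : \sum_(x : F) x ^+ t = 0.
Proof.
have [g /andP [g0 gt]] := exists_gen.
have Hi : injective (fun x : F => g * x) by apply: mulfI.
have : \sum_(x : F) x ^+ t = g ^+ t * \sum_(x : F) x ^+ t.
  rewrite {1}(reindex_inj Hi) /= mulr_sumr; apply: eq_bigr => x _; by rewrite exprMn.
move/eqP; rewrite -subr_eq0 -{1}(mul1r (\sum_x _)) -mulrBl mulf_eq0.
by rewrite subr_eq0 eq_sym (negbTE gt) => /eqP.
Qed.

Lemma psum0 : \sum_(0 <= s < p) f s = 0.
Proof.
have e : (Zp_trunc (pdiv p)).+2 = p := Fp_cast pr.
rewrite -[X in \sum_(0 <= s < X) _]e big_mkord -[RHS]psumF.
by apply: eq_bigr => i _; rewrite /f natr_Zp.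
Qed.

Definition Q (C : pred nat) : F := \sum_(0 <= s < p.+1 | C s) f s.

Lemma Qeq C1 C2 : (forall s, (s <= p)%N -> C1 s = C2 s) -> Q C1 = Q C2.
Proof.
move=> H; rewrite /Q big_nat_cond [RHS]big_nat_cond; apply: eq_bigl => s.
by case: (ltnP s p.+1) => //= Hs; rewrite H.
Qed.

Lemma Qsplit C C1 C2 : (forall s, (s <= p)%N -> C s = C1 s || C2 s) ->
  (forall s, (s <= p)%N -> ~~ (C1 s && C2 s)) -> Q C = Q C1 + Q C2.
Proof.
move=> H1 H2; rewrite /Q (bigID C1) /=; congr (_ + _).
  rewrite big_nat_cond [RHS]big_nat_cond; apply: eq_bigl => s.
  case: (ltnP s p.+1) => //= Hs; rewrite H1 //; by case: (C1 s); case: (C2 s).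
rewrite big_nat_cond [RHS]big_nat_cond; apply: eq_bigl => s.
case: (ltnP s p.+1) => //= Hs; rewrite H1 //; have := H2 s Hs.
by case: (C1 s); case: (C2 s).
Qed.

Lemma Qrev C : Q C = Q (fun s => C (p - s)%N).
Proof.
rewrite /Q big_nat_rev big_nat_cond [RHS]big_nat_cond; apply: eq_big => s.
  by case: (ltnP s p.+1) => //= Hs; rewrite add0n subSS.
move=> /andP [/andP [_ Hs] _]; rewrite add0n subSS.
by rewrite -{2}(subKn (_ : s <= p)%N) ?f_refl //; lia.
Qed.

Lemma Qall : Q (fun _ => true) = 0.
Proof. by rewrite /Q big_nat_recr //= psum0 fp0 addr0. Qed.

Lemma Qhalf : Q (fun s => (s <= N)%N) = 0.
Proof.
have := Qall; rewrite (@Qsplit _ (fun s => (s <= N)%N) (fun s => (N < s)%N)); last 2 first.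
- by move=> s _; case: (leqP s N).
- by move=> s _; case: (leqP s N).
rewrite [X in _ + X]Qrev (@Qeq (fun s => N < p - s)%N (fun s => s <= N)%N); last first.
  by move=> s Hs; apply/idP/idP; lia.
move/eqP; rewrite -mulr2n -mulr_natr mulf_eq0 (negbTE two_neq0) orbF.
by move/eqP.
Qed.

Lemma Qlow (C : pred nat) : (forall s, (s <= p)%N -> C s -> (s <= N)%N) ->
  Q C = \sum_(0 <= s < N.+1) (if C s then f s else 0).
Proof.
move=> H; rewrite /Q big_mkcond (@big_cat_nat _ _ _ N.+1) //=; last lia.
rewrite [X in _ + X]big_nat [X in _ + X]big1 ?addr0 // => s /andP [H1 H2].
by case Hc: (C s) => //; have := H s (_ : s <= p)%N Hc; lia.
Qed.

Lemma Dlem m : (2 <= m)%N ->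
  Q (fun r => m * r < 2 * p)%N = 2 ^+ t * Q (fun s => m * s < p)%N
     + 2 ^+ t * Q (fun s => ((m - 2) * p < 2 * m * s) && (2 * s < p))%N.
Proof.
move=> Hm.
rewrite (@Qlow (fun s => m * s < p)%N); last by move=> s _ /= H; nia.
rewrite (@Qlow (fun s => ((m - 2) * p < 2 * m * s) && (2 * s < p))%N); last first.
  by move=> s _ /= /andP [_ H]; lia.
rewrite /Q big_mkcond /=.
have e : p.+1 = (2 * N.+1)%N by lia.
rewrite [X in \sum_(0 <= r < X) _]e [LHS]big_mkord (even_odd_split (fun r => if (m * r < 2 * p)%N then f r else 0)).
congr (_ + _).
  rewrite mulr_sumr big_mkord; apply: eq_bigr => i _.
  have -> : (m * (2 * i) < 2 * p)%N = (m * i < p)%N by apply/idP/idP; lia.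
  by case: ifP; rewrite ?mulr0 // f_double.
rewrite mulr_sumr -(big_mkord xpredT (fun i => if (m * (2 * i).+1 < 2 * p)%N then f (2 * i).+1 else 0)).
rewrite big_nat_rev big_nat [RHS]big_nat; apply: eq_bigr => i /andP [_ Hi].
have -> : (0 + N.+1 - i.+1 = N - i)%N by lia.
have -> : (m * (2 * (N - i)).+1 < 2 * p)%N = ((m - 2) * p < 2 * m * i)%N && (2 * i < p)%N.
  by apply/idP/idP; [move=> H; apply/andP; split | move=> /andP [H1 H2]]; nia.
case: ifP; rewrite ?mulr0 // => _.
have -> : (2 * (N - i)).+1 = (p - 2 * i)%N by lia.
by rewrite f_refl ?f_double //; lia.
Qed.

Lemma f0 : f 0 = 0.
Proof. by rewrite /f expr0n eqn0Ngt t0. Qed.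

Lemma Qpos (C : pred nat) : Q C = Q (fun s => C s && (0 < s)%N).
Proof.
rewrite (@Qsplit C (fun s => C s && (0 < s)%N) (fun s => C s && (s == 0)%N)); last 2 first.
- by move=> s _; case: (C s); case: s.
- by move=> s _; case: (C s); case: s.
rewrite [X in _ + X]/Q [X in _ + X]big1 ?addr0 // => s /andP [_ /eqP ->]; exact: f0.
Qed.

Lemma Qeven : Q (fun r => ~~ odd r && (r <= N))%N = 2 ^+ t * Q (fun s => 4 * s < p)%N.
Proof.
rewrite (@Qlow (fun s => 4 * s < p)%N); last by move=> s _ /= H; lia.
rewrite /Q big_mkcond /=.
have e : p.+1 = (2 * N.+1)%N by lia.
rewrite [X in \sum_(0 <= r < X) _]e [LHS]big_mkord.
rewrite (even_odd_split (fun r => if ~~ odd r && (r <= N)%N then f r else 0)).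
rewrite [X in _ + X]big1 ?addr0; last by move=> i _; rewrite oddS oddM.
rewrite mulr_sumr big_mkord; apply: eq_bigr => i _.
rewrite oddM /=.
have -> : (2 * i <= N)%N = (4 * i < p)%N by apply/idP/idP; lia.
by case: ifP; rewrite ?mulr0 // f_double.
Qed.

Lemma alt_rel : \sum_(0 <= s < N.+1) (-1) ^+ s * f s = 2 * (2 ^+ t * Q (fun s => 4 * s < p)%N).
Proof.
have H0 : \sum_(0 <= s < N.+1) f s = 0.
  rewrite -[RHS]Qhalf (@Qlow (fun s => s <= N)%N) //.
  rewrite !big_nat; apply: eq_bigr => s /andP [_ Hs]; rewrite ifT //; lia.
rewrite -Qeven (@Qlow (fun r => ~~ odd r && (r <= N))%N); last by move=> s _ /andP [].
transitivity (\sum_(0 <= s < N.+1) (-1) ^+ s * f s + \sum_(0 <= s < N.+1) f s).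
  by rewrite H0 addr0.
rewrite -big_split mulr_sumr !big_nat; apply: eq_bigr => s /andP [_ Hs] /=.
rewrite -signr_odd; case: (odd s) => /=.
  by rewrite expr1 mulN1r addNr mulr0.
by rewrite ifT ?expr0 ?mul1r ?mulr_natl ?mulr2n //; lia.
Qed.


Lemma G1 : Geu t (1 : F) = 0.
Proof.
have := Gshift t (0 : F); rewrite add0r sub0r Geven // expr0n eqn0Ngt t0 mulr0.
move/eqP; rewrite -mulr2n -mulr_natr mulf_eq0 (negbTE two_neq0) orbF.
by move/eqP.
Qed.

Lemma euler_rel : 2 * 2 ^+ t * (2 * (2 ^+ t * Q (fun s => 4 * s < p)%N)) = (-1) ^+ N * std F t.
Proof.
have := tele F N t0; rewrite G1 subr0.
have -> : ((2 * N).+1%:R : F) = 0 by rewrite -pN pchar_Fp_0.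
rewrite G0 => <-.
rewrite -alt_rel mulr_sumr !big_nat; apply: eq_bigr => s _.
have := f_double s; rewrite /f => ->; ring.
Qed.

Lemma fermat2 : (2 : F) ^+ p.-1 = 1.
Proof.
apply: (mulIf two_neq0); rewrite mul1r -exprSr prednK ?prime_gt0 //.
by have := expf_card (2 : F); rewrite card_Fp.
Qed.

Lemma ratcond1 a b s : (0 < b)%N ->
  ((a%:R / b%:R) * p%:R < s%:R :> rat) = (a * p < b * s)%N.
Proof.
by move=> hb; rewrite mulrAC ltr_pdivrMr ?ltr0n // -!natrM ltr_nat [(s * b)%N]mulnC.
Qed.

Lemma ratcond2 c d s : (0 < d)%N ->
  (s%:R < (c%:R / d%:R) * p%:R :> rat) = (d * s < c * p)%N.
Proof.
by move=> hd; rewrite mulrAC ltr_pdivlMr ?ltr0n // -!natrM ltr_nat [(s * d)%N]mulnC.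
Qed.

Lemma Scast a b c d : (0 < b)%N -> (0 < d)%N ->
  ((S p t (a%:R / b%:R) (c%:R / d%:R))%:~R : F) =
  Q (fun s => (a * p < b * s) && (d * s < c * p))%N.
Proof.
move=> hb hd; rewrite /S rmorph_sum /Q; apply: eq_big => s.
  by rewrite ratcond1 // ratcond2.
by move=> _; rewrite rmorphXn.
Qed.

Lemma finalF k : (1 <= k)%N -> t = (p - 1 - 2 * k)%N ->
  (-1) ^+ k * 4 ^+ (2 * k - 1) * (euler t)%:~R =
    16 ^+ t * Q (fun s => (0 * p < 1 * s) && (64 * s < 1 * p))%N
  + 2 ^+ t * Q (fun s => (3 * p < 8 * s) && (16 * s < 7 * p))%N
  + (2 ^+ t + 4 ^+ t) * Q (fun s => (7 * p < 16 * s) && (32 * s < 15 * p))%N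
  + (2 ^+ t + 4 ^+ t + 8 ^+ t) * Q (fun s => (15 * p < 32 * s) && (64 * s < 31 * p))%N
  + (2 ^+ t + 4 ^+ t + 8 ^+ t + 16 ^+ t) * Q (fun s => (31 * p < 64 * s) && (2 * s < 1 * p))%N
  :> F.
Proof.
move=> hk htk.
set c1 := Q _; set c2 := Q _; set c3 := Q _; set c4 := Q _; set c5 := Q _.
set A := Q (fun s => 4 * s < p)%N.
set u : F := 2 ^+ t.
have H4 : (4 : F) = 2 * 2 by rewrite -natrM.
have H8 : (8 : F) = 2 * 2 * 2 by rewrite -!natrM.
have H16 : (16 : F) = 2 * 2 * 2 * 2 by rewrite -!natrM.
rewrite H8 H16 H4 !exprMn -/u.
have d8 := @Dlem 8 isT; have d16 := @Dlem 16 isT; have d32 := @Dlem 32 isT; have d64 := @Dlem 64 isT.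
rewrite -/u in d8 d16 d32 d64.
have e8 : Q (fun r => 8 * r < 2 * p)%N = A by apply: Qeq => s _ /=; apply/idP/idP; lia.
have e16 : Q (fun r => 16 * r < 2 * p)%N = Q (fun s => 8 * s < p)%N by apply: Qeq => s _ /=; apply/idP/idP; lia.
have e32 : Q (fun r => 32 * r < 2 * p)%N = Q (fun s => 16 * s < p)%N by apply: Qeq => s _ /=; apply/idP/idP; lia.
have e64 : Q (fun r => 64 * r < 2 * p)%N = Q (fun s => 32 * s < p)%N by apply: Qeq => s _ /=; apply/idP/idP; lia.
have i31 : Q (fun s => ((64 - 2) * p < 2 * 64 * s) && (2 * s < p))%N = c5.
  by apply: Qeq => s _ /=; apply/idP/idP; lia.
have i30 : Q (fun s => ((32 - 2) * p < 2 * 32 * s) && (2 * s < p))%N = c4 + c5.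
  apply: Qsplit => s _ /=; apply/idP/idP; lia.
have i28 : Q (fun s => ((16 - 2) * p < 2 * 16 * s) && (2 * s < p))%N = c3 + (c4 + c5).
  rewrite -i30; apply: Qsplit => s _ /=; apply/idP/idP; lia.
have i24 : Q (fun s => ((8 - 2) * p < 2 * 8 * s) && (2 * s < p))%N = c2 + (c3 + (c4 + c5)).
  rewrite -i28; apply: Qsplit => s _ /=; apply/idP/idP; lia.
have b1 : Q (fun s => 64 * s < p)%N = c1.
  rewrite Qpos; apply: Qeq => s _ /=; apply/idP/idP; lia.
rewrite e8 i24 in d8; rewrite e16 i28 in d16; rewrite e32 i30 in d32; rewrite e64 i31 b1 in d64.
have RA : A = u ^+ 4 * c1 + u * c2 + (u + u ^+ 2) * c3 + (u + u ^+ 2 + u ^+ 3) * c4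
              + (u + u ^+ 2 + u ^+ 3 + u ^+ 4) * c5.
  rewrite d8 d16 d32 d64; ring.
transitivity A; last by rewrite RA; ring.
have ER := euler_rel; rewrite -/u -/A /std (negbTE tev) in ER.
have ht2 : (t./2 = N - k)%N.
  have -> : t = (2 * (N - k))%N by lia.
  by rewrite mul2n doubleK.
rewrite ht2 in ER.
have sg : (-1) ^+ N = (-1) ^+ (N - k) * (-1) ^+ k :> F by rewrite -exprD subnK //; lia.
have bb : (-1) ^+ (N - k) * (-1) ^+ (N - k) = 1 :> F by rewrite -exprMn mulrNN mulr1 expr1n.
have X : (-1) ^+ k * (euler t)%:~R = 2 * 2 * (u * u) * A.
  transitivity ((-1) ^+ N * ((-1) ^+ (N - k) * (euler t)%:~R) : F); last by rewrite -ER; ring.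
  rewrite sg.
  transitivity ((-1) ^+ (N - k) * (-1) ^+ (N - k) * ((-1) ^+ k * (euler t)%:~R) : F).
    by rewrite bb mul1r.
  ring.
have pw : (2 : F) ^+ (2 * k - 1) * 2 ^+ (2 * k - 1) * (2 * 2 * (u * u)) = 1.
  have e22 : (2 * 2 : F) = 2 ^+ 2 by rewrite expr2.
  rewrite /u e22 -!exprD.
  have -> : (2 * k - 1 + (2 * k - 1) + (2 + (t + t)) = p.-1 + p.-1)%N by lia.
  by rewrite exprD fermat2 mulr1.
transitivity ((2 : F) ^+ (2 * k - 1) * 2 ^+ (2 * k - 1) * ((-1) ^+ k * (euler t)%:~R)); first ring.
by rewrite X mulrA pw mul1r.
Qed.



End Fp.







Unset Implicit Arguments.

Lemma Fp_int0 p (z : int) : prime p -> (z%:~R : 'F_p) = 0 -> (p%:Z %| z)%Z.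
Proof.
move=> pr; case: z => n.
  by move=> /(natF0 pr).
rewrite NegzE rmorphN /= => /eqP; rewrite oppr_eq0 => /eqP H.
by have := natF0 pr H.
Qed.

Theorem mainTheorem6 (p k : nat) :
  prime p -> (5 <= p)%N -> (1 <= k)%N -> (k <= (p - 3) %/ 2)%N ->
  let t := (p - 1 - 2 * k)%N in
  (((-1) ^+ k * 4 ^+ (2 * k - 1) * euler t
    == 16 ^+ t * S p t 0 (1/64)
       + 2 ^+ t * S p t (3/8) (7/16)
       + (2 ^+ t + 4 ^+ t) * S p t (7/16) (15/32)
       + (2 ^+ t + 4 ^+ t + 8 ^+ t) * S p t (15/32) (31/64)
       + (2 ^+ t + 4 ^+ t + 8 ^+ t + 16 ^+ t) * S p t (31/64) (1/2)
    %[mod (p%:Z)])%Z).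
Proof.
move=> pr p5 k1 kp /=; set t := (p - 1 - 2 * k)%N.
have podd : odd p.
  by case: (even_prime pr) => // p2; move: p5; rewrite p2.
pose N := p./2.
have pN : p = (2 * N).+1.
  by rewrite /N -{1}(odd_double_half p) podd mul2n.
have tev : ~~ odd t.
  have -> : t = (2 * (N - k))%N by rewrite /t; lia.
  by rewrite oddM.
have t0 : (0 < t)%N by rewrite /t; lia.
have tp : (t < p.-1)%N by rewrite /t; lia.
have htk : t = (p - 1 - 2 * k)%N by [].
rewrite eqz_mod_dvd; apply: (@Fp_int0 p _ pr); rewrite rmorphB /=; apply/eqP; rewrite subr_eq0; apply/eqP.
have s1 : ((S p t 0 (1/64))%:~R : 'F_p) = Q p t (fun s => (0 * p < 1 * s) && (64 * s < 1 * p))%N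
  := @Scast p t 0 1 1 64 isT isT.
have s2 : ((S p t (3/8) (7/16))%:~R : 'F_p) = Q p t (fun s => (3 * p < 8 * s) && (16 * s < 7 * p))%N
  := @Scast p t 3 8 7 16 isT isT.
have s3 : ((S p t (7/16) (15/32))%:~R : 'F_p) = Q p t (fun s => (7 * p < 16 * s) && (32 * s < 15 * p))%N
  := @Scast p t 7 16 15 32 isT isT.
have s4 : ((S p t (15/32) (31/64))%:~R : 'F_p) = Q p t (fun s => (15 * p < 32 * s) && (64 * s < 31 * p))%N
  := @Scast p t 15 32 31 64 isT isT.
have s5 : ((S p t (31/64) (1/2))%:~R : 'F_p) = Q p t (fun s => (31 * p < 64 * s) && (2 * s < 1 * p))%N
  := @Scast p t 31 64 1 2 isT isT.
rewrite !rmorphD !rmorphM /= s1 s2 s3 s4 s5.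
rewrite !rmorphD !rmorphXn /=.
exact: (finalF pr pN tev t0 tp k1 htk).
Qed.
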